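(* Consider the graded cluster algebra $\mathcal{A}\big((x_1,x_2,x_3),B,(1,1,2)\big)$ with $B=\begin{pmatrix}0&2&-1\\-2&0&1\\1&-1&0\end{pmatrix}$. It has exactly one cluster variable of degree $2$ and exactly one cluster variable of degree $-2$.
   Context: Graded cluster algebras: for a $3\times3$ skew-symmetric integer matrix $B=(b_{ij})$ and $k\in\{1,2,3\}$, $\mu_k(B)=(b'_{ij})$ with $b'_{ij}=-b_{ij}$ if $i=k$ or $j=k$ and $b'_{ij}=b_{ij}+\operatorname{sgn}(b_{ik})\max(b_{ik}b_{kj},0)$ otherwise. A seed $((x_1,x_2,x_3),B)$ mutates in direction $k$ to $(x',\mu_k B)$ with $x'_j=x_j$ ($j\ne k$) and $x'_k=\big(\prod_{b_{ik}>0}x_i^{b_{ik}}+\prod_{b_{ik}<0}x_i^{-b_{ik}}\big)/x_k$. Cluster variables are all entries of clusters reachable by iterated mutation; $\mathcal{A}(x,B,g)$ is the algebra they generate, graded by $\deg x_i=g_i$ where $Bg=0$; under mutation at $k$ the degree vector becomes $g'$ with $g'_j=g_j$ ($j\neq k$), $g'_k=-g_k+\sum_{b_{ik}>0}b_{ik}g_i$, and every cluster variable is homogeneous. *)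

(* Defs.v *)
From HB Require Import structures.
From mathcomp Require Import all_boot all_order all_algebra.
From mathcomp Require Import fraction.
From mathcomp Require Import mpoly.
Set Implicit Arguments. Unset Strict Implicit. Unset Printing Implicit Defensive.
Import Order.TTheory GRing.Theory Num.Theory.
Local Open Scope ring_scope.

Definition ratfun3 : fieldType := {fraction {mpoly rat[3]}}.

(* The initial cluster variables x_1, x_2, x_3 (indexed by 'I_3 = {0,1,2}). *)
Definition xinit (i : 'I_3) : ratfun3 := tofrac ('X_i : {mpoly rat[3]}).

Definition mutB (k : 'I_3) (B : 'M[int]_3) : 'M[int]_3 :=
  \matrix_(i < 3, j < 3)
    if (i == k) || (j == k) then - B i j
    else B i j + sgz (B i k) * Num.max (B i k * B k j) 0.

Definition mutx (k : 'I_3) (B : 'M[int]_3) (x : 'I_3 -> ratfun3) : 'I_3 -> ratfun3 :=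
  fun j => if j == k then
     ((\prod_(i < 3 | 0 < B i k) x i ^+ `|B i k|%N)
      + (\prod_(i < 3 | B i k < 0) x i ^+ `|B i k|%N)) / x k
   else x j.

Definition mutg (k : 'I_3) (B : 'M[int]_3) (g : 'I_3 -> int) : 'I_3 -> int :=
  fun j => if j == k then - g k + \sum_(i < 3 | 0 < B i k) B i k * g i
   else g j.

Inductive reachable (x0 : 'I_3 -> ratfun3) (B0 : 'M[int]_3) (g0 : 'I_3 -> int) :
  ('I_3 -> ratfun3) -> 'M[int]_3 -> ('I_3 -> int) -> Prop :=
| reach_init : reachable x0 B0 g0 x0 B0 g0
| reach_mut x B g (k : 'I_3) : reachable x0 B0 g0 x B g ->
    reachable x0 B0 g0 (mutx k B x) (mutB k B) (mutg k B g).

Definition cluster_var_of_deg x0 B0 g0 (d : int) (z : ratfun3) : Prop :=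
  exists x B g (k : 'I_3), reachable x0 B0 g0 x B g /\ x k = z /\ g k = d.

Definition B6 : 'M[int]_3 :=
  \matrix_(i < 3, j < 3)
    (nth 0 (nth [::] [:: [:: 0; 2; -1]; [:: -2; 0; 1]; [:: 1; -1; 0]] i) j : int).

Definition g6 (i : 'I_3) : int := nth 0 [:: 1; 1; 2] i.

(* Main.v *)
Require Import Defs.
From HB Require Import structures.
From mathcomp Require Import all_boot all_order all_algebra.
From mathcomp Require Import fraction.
From mathcomp Require Import mpoly.
From mathcomp Require Import ring.
Set Implicit Arguments. Unset Strict Implicit. Unset Printing Implicit Defensive.
Import Order.TTheory GRing.Theory Num.Theory.
Local Open Scope ring_scope.

Lemma fM (F : fieldType) (a b c d : F) : b != 0 -> d != 0 -> a/b * (c/d) = (a*c)/(b*d).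
Proof. move=> hb hd; field; by rewrite hb hd. Qed.
Lemma fD (F : fieldType) (a b c d : F) : b != 0 -> d != 0 -> a/b + c/d = (a*d+c*b)/(b*d).
Proof. move=> hb hd; field; by rewrite hb hd. Qed.

Definition ev (p : {mpoly rat[3]}) : rat := p.@[fun _ => 1].

Definition Pos (z : ratfun3) : Prop :=
  exists p q : {mpoly rat[3]}, 0 < ev p /\ 0 < ev q /\ z = tofrac p / tofrac q.

Lemma ev_neq0 p : 0 < ev p -> tofrac p != 0 :> ratfun3.
Proof.
move=> h; rewrite tofrac_eq0; apply/eqP => e; move: h; by rewrite e /ev meval0 ltxx.
Qed.

Lemma Pos_neq0 z : Pos z -> z != 0.
Proof.
case=> p [q [hp [hq ->]]]; by rewrite mulf_neq0 ?invr_eq0 ?ev_neq0.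
Qed.

Lemma Pos1 : Pos 1.
Proof. exists 1, 1; rewrite /ev meval1 ltr01 divr1 tofrac1; by []. Qed.

Lemma PosM a b : Pos a -> Pos b -> Pos (a * b).
Proof.
case=> p1 [q1 [h1 [h1' ->]]]; case=> p2 [q2 [h2 [h2' ->]]].
exists (p1 * p2), (q1 * q2); rewrite /ev !mevalM; split; first exact: mulr_gt0.
split; first exact: mulr_gt0.
by rewrite !tofracM fM ?ev_neq0.
Qed.

Lemma PosD a b : Pos a -> Pos b -> Pos (a + b).
Proof.
case=> p1 [q1 [h1 [h1' ->]]]; case=> p2 [q2 [h2 [h2' ->]]].
exists (p1 * q2 + p2 * q1), (q1 * q2); rewrite /ev !mevalD !mevalM; split.
  by apply: addr_gt0; apply: mulr_gt0.
split; first exact: mulr_gt0.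
by rewrite !tofracD !tofracM fD ?ev_neq0.
Qed.

Lemma PosV a : Pos a -> Pos (a^-1).
Proof.
case=> p1 [q1 [h1 [h1' ->]]]; exists q1, p1; split=> //; split=> //.
by rewrite invf_div.
Qed.

Lemma PosX a n : Pos a -> Pos (a ^+ n).
Proof. move=> h; elim: n => [|n IH]; first by rewrite expr0; exact: Pos1. by rewrite exprS; apply: PosM. Qed.

Lemma Pos_xinit i : Pos (xinit i).
Proof.
exists 'X_i, 1; rewrite /ev meval1 mevalXU ltr01 tofrac1 divr1; by [].
Qed.

Lemma Pos_prod (P : pred 'I_3) (F : 'I_3 -> ratfun3) :
  (forall i, Pos (F i)) -> Pos (\prod_(i < 3 | P i) F i).
Proof. move=> h; apply: (big_ind Pos Pos1 PosM) => i _; exact: h. Qed.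

Lemma Pos_mutx k B x : (forall i, Pos (x i)) -> forall i, Pos (mutx k B x i).
Proof.
move=> h i; rewrite /mutx; case: eqP => _ //.
apply: PosM; last exact: PosV.
by apply: PosD; apply: Pos_prod => j; apply: PosX.
Qed.
Definition Btab : seq (seq (seq int)) := [:: [:: [:: 0; 2; -1]; [:: -2; 0; 1]; [:: 1; -1; 0]];
  [:: [:: 0; -2; 1]; [:: 2; 0; -1]; [:: -1; 1; 0]];
  [:: [:: 0; -1; -1]; [:: 1; 0; -1]; [:: 1; 1; 0]];
  [:: [:: 0; -1; -1]; [:: 1; 0; 1]; [:: 1; -1; 0]];
  [:: [:: 0; -1; 1]; [:: 1; 0; -2]; [:: -1; 2; 0]];
  [:: [:: 0; -1; 1]; [:: 1; 0; 1]; [:: -1; -1; 0]];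
  [:: [:: 0; -1; 2]; [:: 1; 0; -1]; [:: -2; 1; 0]];
  [:: [:: 0; 1; -2]; [:: -1; 0; 1]; [:: 2; -1; 0]];
  [:: [:: 0; 1; -1]; [:: -1; 0; -1]; [:: 1; 1; 0]];
  [:: [:: 0; 1; -1]; [:: -1; 0; 2]; [:: 1; -2; 0]];
  [:: [:: 0; 1; 1]; [:: -1; 0; -1]; [:: -1; 1; 0]];
  [:: [:: 0; 1; 1]; [:: -1; 0; 1]; [:: -1; -1; 0]]].
Definition gtab : seq (seq int) := [:: [:: 1; 1; 2]; [:: 1; 1; 2]; [:: -1; 1; -1]; [:: -1; -1; 1]; [:: 2; 1; 1]; [:: -1; 1; 1]; [:: 1; 2; 1]; [:: 1; 2; 1]; [:: -1; 1; 1]; [:: 2; 1; 1]; [:: -1; -1; 1]; [:: -1; 1; -1]].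
Definition nxtab : seq (seq nat) := [:: [:: 1; 1; 10]; [:: 0; 0; 3]; [:: 10; 7; 5]; [:: 11; 8; 1]; [:: 8; 9; 9]; [:: 9; 10; 2]; [:: 7; 11; 7]; [:: 6; 2; 6]; [:: 4; 3; 11]; [:: 5; 4; 4]; [:: 2; 5; 0]; [:: 3; 6; 8]].
Definition fltab : seq (seq bool) := [:: [:: false; false; true]; [:: false; false; true]; [:: true; true; false]; [:: true; false; true]; [:: false; false; false]; [:: false; false; false]; [:: false; true; false]; [:: false; true; false]; [:: false; false; false]; [:: false; false; false]; [:: true; false; true]; [:: true; true; false]].
Definition eptab : seq (seq (seq nat)) := [:: [:: [:: 0; 0; 1]; [:: 2; 0; 0]; [:: 0; 1; 0]]; [:: [:: 0; 2; 0]; [:: 0; 0; 1]; [:: 1; 0; 0]]; [:: [:: 0; 1; 1]; [:: 0; 0; 1]; [:: 0; 0; 0]]; [:: [:: 0; 1; 1]; [:: 0; 0; 0]; [:: 0; 1; 0]]; [:: [:: 0; 1; 0]; [:: 0; 0; 2]; [:: 1; 0; 0]]; [:: [:: 0; 1; 0]; [:: 0; 0; 0]; [:: 1; 1; 0]]; [:: [:: 0; 1; 0]; [:: 0; 0; 1]; [:: 2; 0; 0]]; [:: [:: 0; 0; 2]; [:: 1; 0; 0]; [:: 0; 1; 0]]; [:: [:: 0; 0; 1]; [:: 1; 0; 1]; [:: 0; 0; 0]]; [:: [:: 0; 0; 1]; [:: 1; 0; 0]; [:: 0; 2; 0]]; [:: [:: 0; 0; 0]; [:: 1; 0; 1]; [::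 1; 0; 0]]; [:: [:: 0; 0; 0]; [:: 1; 0; 0]; [:: 1; 1; 0]]].
Definition entab : seq (seq (seq nat)) := [:: [:: [:: 0; 2; 0]; [:: 0; 0; 1]; [:: 1; 0; 0]]; [:: [:: 0; 0; 1]; [:: 2; 0; 0]; [:: 0; 1; 0]]; [:: [:: 0; 0; 0]; [:: 1; 0; 0]; [:: 1; 1; 0]]; [:: [:: 0; 0; 0]; [:: 1; 0; 1]; [:: 1; 0; 0]]; [:: [:: 0; 0; 1]; [:: 1; 0; 0]; [:: 0; 2; 0]]; [:: [:: 0; 0; 1]; [:: 1; 0; 1]; [:: 0; 0; 0]]; [:: [:: 0; 0; 2]; [:: 1; 0; 0]; [:: 0; 1; 0]]; [:: [:: 0; 1; 0]; [:: 0; 0; 1]; [:: 2; 0; 0]]; [:: [:: 0; 1; 0]; [:: 0; 0; 0]; [:: 1; 1; 0]]; [:: [:: 0; 1; 0]; [:: 0; 0; 2]; [:: 1; 0; 0]]; [:: [:: 0; 1; 1]; [:: 0; 0; 0]; [:: 0; 1; 0]]; [:: [:: 0; 1; 1]; [:: 0; 0; 1]; [:: 0; 0; 0]]].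
Definition Ft {K : fieldType} (t : nat) (a b c : K) : K :=
  match t with
  | 0 => c
  | 1 => c
  | 2 => (1 + b*c + a*b) / (a*c)
  | 3 => (1 + b*c + a*c) / (a*b)
  | 4 => a
  | 5 => (c + b) / (a)
  | 6 => b
  | 7 => b
  | 8 => (c + b) / (a)
  | 9 => a
  | 10 => (1 + b*c + a*c) / (a*b)
  | _ => (1 + b*c + a*b) / (a*c)
  end.
Definition Gt {K : fieldType} (t : nat) (a b c : K) : K :=
  match t with
  | 0 => (c + b^+2 + 2*a*b + a^+2) / (a*b*c)
  | 1 => (c + b^+2 + 2*a*b + a^+2) / (a*b*c)
  | 2 => (c + a) / (b)
  | 3 => (b + a) / (c)
  | 4 => (c^+2 + 2*b*c + b^+2 + a) / (a*b*c)
  | 5 => (1 + a*c + a*b) / (b*c)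
  | 6 => (c^+2 + b + 2*a*c + a^+2) / (a*b*c)
  | 7 => (c^+2 + b + 2*a*c + a^+2) / (a*b*c)
  | 8 => (1 + a*c + a*b) / (b*c)
  | 9 => (c^+2 + 2*b*c + b^+2 + a) / (a*b*c)
  | 10 => (b + a) / (c)
  | _ => (c + a) / (b)
  end.
Definition ep (t k i : nat) : nat := nth 0%N (nth [::] (nth [::] eptab t) k) i.
Definition en (t k i : nat) : nat := nth 0%N (nth [::] (nth [::] entab t) k) i.
Definition nx (t k : nat) : nat := nth 0%N (nth [::] nxtab t) k.
Definition fl (t k : nat) : bool := nth false (nth [::] fltab t) k.
Definition ex {K : fieldType} t k (a b c : K) : K :=
  a ^+ ep t k 0 * b ^+ ep t k 1 * c ^+ ep t k 2 + a ^+ en t k 0 * b ^+ en t k 1 * c ^+ en t k 2.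
Definition mu3 {K : fieldType} t k (a b c : K) : K * K * K :=
  match k with 0%N => (ex t k a b c / a, b, c) | 1%N => (a, ex t k a b c / b, c) | _ => (a, b, ex t k a b c / c) end.
Lemma ident (K : fieldType) t k (a b c : K) : (t < 12)%N -> (k < 3)%N ->
  a != 0 -> b != 0 -> c != 0 -> ex t k a b c != 0 ->
  (Ft (nx t k) (mu3 t k a b c).1.1 (mu3 t k a b c).1.2 (mu3 t k a b c).2,
   Gt (nx t k) (mu3 t k a b c).1.1 (mu3 t k a b c).1.2 (mu3 t k a b c).2) =
  if fl t k then (Gt t a b c, Ft t a b c) else (Ft t a b c, Gt t a b c).
Proof.
move=> ht hk ha hb hc.
do 12?[case: t ht => [|t] ht]; do 3?[case: k hk => [|k] hk] => //;
move=> he; rewrite /mu3 /ex /ep /en /= ?expr0 ?expr1 ?mul1r ?mulr1 in he *; f_equal; field; rewrite ?ha ?hb ?hc ?he //.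
Qed.

Definition Bt (t i j : nat) : int := nth 0 (nth [::] (nth [::] Btab t) i) j.
Definition gt (t i : nat) : int := nth 0 (nth [::] gtab t) i.

Definition mutBn (t k i j : nat) : int :=
  if (i == k) || (j == k) then - Bt t i j
  else Bt t i j + sgz (Bt t i k) * Num.max (Bt t i k * Bt t k j) 0.
Definition Gs (t : nat) (s : bool) (i : nat) : int := if s then - gt t i else gt t i.
Definition sg (t k : nat) (s : bool) (i : nat) : int :=
  if 0 < Bt t i k then Bt t i k * Gs t s i else 0.
Definition mutgn (t k : nat) (s : bool) (j : nat) : int :=
  if j == k then - Gs t s k + (sg t k s 0 + sg t k s 1 + sg t k s 2)
  else Gs t s j.

Definition all3 (P : nat -> bool) := all P (iota 0 3).
Definition checkAll : bool :=
  all (fun t => [&& (nx t 0 < 12)%N, (nx t 1 < 12)%N, (nx t 2 < 12)%N &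
   all3 (fun k => all3 (fun i =>
     [&& (ep t k i == (if 0 < Bt t i k then `|Bt t i k|%N else 0%N)),
     (en t k i == (if Bt t i k < 0 then `|Bt t i k|%N else 0%N)),
     (mutgn t k false i == Gs (nx t k) (fl t k) i),
     (mutgn t k true i == Gs (nx t k) (~~ fl t k) i) &
     all3 (fun j => mutBn t k i j == Bt (nx t k) i j)]))]) (iota 0 12).

Lemma checkAll_ok : checkAll. Proof. vm_compute. reflexivity. Qed.

Lemma all3P (i : 'I_3) (P : nat -> bool) : all3 P -> P i.
Proof. move=> /allP h; apply: h; rewrite mem_iota; exact: ltn_ord. Qed.

Lemma check_t t : (t < 12)%N -> [&& (nx t 0 < 12)%N, (nx t 1 < 12)%N, (nx t 2 < 12)%N &
   all3 (fun k => all3 (fun i =>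
     [&& (ep t k i == (if 0 < Bt t i k then `|Bt t i k|%N else 0%N)),
     (en t k i == (if Bt t i k < 0 then `|Bt t i k|%N else 0%N)),
     (mutgn t k false i == Gs (nx t k) (fl t k) i),
     (mutgn t k true i == Gs (nx t k) (~~ fl t k) i) &
     all3 (fun j => mutBn t k i j == Bt (nx t k) i j)]))].
Proof. move=> ht; move/allP: checkAll_ok => /(_ t); rewrite mem_iota; exact. Qed.

Definition o0 : 'I_3 := @Ordinal 3 0 isT.
Definition o1 : 'I_3 := @Ordinal 3 1 isT.
Definition o2 : 'I_3 := @Ordinal 3 2 isT.

Lemma ord3_cases (k : 'I_3) : k = o0 \/ k = o1 \/ k = o2.
Proof.
case: k => [[|[|[|m]]] h]; [left|right;left|right;right|by []]; exact: val_inj.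
Qed.

Lemma prod3 (R : comRingType) (F : 'I_3 -> R) : \prod_(i < 3) F i = F o0 * F o1 * F o2.
Proof.
rewrite !big_ord_recr big_ord0 /= mul1r.
by congr (F _ * F _ * F _); apply: val_inj.
Qed.

Lemma sum3 (F : 'I_3 -> int) : \sum_(i < 3) F i = F o0 + F o1 + F o2.
Proof.
rewrite !big_ord_recr big_ord0 /= add0r.
by congr (F _ + F _ + F _); apply: val_inj.
Qed.

Definition X3 : ratfun3 := xinit o2.
Definition W : ratfun3 := Gt 0 (xinit o0) (xinit o1) (xinit o2).

Definition Inv (x : 'I_3 -> ratfun3) (B : 'M[int]_3) (g : 'I_3 -> int) : Prop :=
  exists t s, (t < 12)%N /\ (forall i j : 'I_3, B i j = Bt t i j) /\
   (forall i : 'I_3, g i = Gs t s i) /\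
   (X3, W) = (if s then (Gt t (x o0) (x o1) (x o2), Ft t (x o0) (x o1) (x o2))
              else (Ft t (x o0) (x o1) (x o2), Gt t (x o0) (x o1) (x o2))).

Lemma mutB_step (k : 'I_3) (B : 'M[int]_3) t : (t < 12)%N -> (forall i j : 'I_3, B i j = Bt t i j) ->
  forall i j : 'I_3, mutB k B i j = Bt (nx t k) i j.
Proof.
move=> ht hB i j; move/and4P: (check_t ht) => [_ _ _ /(all3P k) /(all3P i) h].
move/and5P: h => [_ _ _ _ /(all3P j) /eqP <-].
by rewrite /mutB mxE /mutBn !hB.
Qed.

Lemma mutg_step (k : 'I_3) (B : 'M[int]_3) g t s : (t < 12)%N ->
  (forall i j : 'I_3, B i j = Bt t i j) -> (forall i : 'I_3, g i = Gs t s i) ->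
  forall j : 'I_3, mutg k B g j = Gs (nx t k) (s (+) fl t k) j.
Proof.
move=> ht hB hg j; move/and4P: (check_t ht) => [_ _ _ /(all3P k) /(all3P j) h].
move/and5P: h => [_ _ hf ht' _].
have -> : mutg k B g j = mutgn t k s j.
  rewrite /mutg /mutgn big_mkcond sum3 /= !hB !hg.
  by [].
by case: s {hg}; [move/eqP: ht' | move/eqP: hf].
Qed.

Lemma mutx_step (k : 'I_3) (B : 'M[int]_3) x t : (t < 12)%N ->
  (forall i j : 'I_3, B i j = Bt t i j) ->
  forall j : 'I_3, mutx k B x j =
    if j == k then ex t k (x o0) (x o1) (x o2) / x k else x j.
Proof.
move=> ht hB j; rewrite /mutx; case: eqP => // _.
have hp : forall i : 'I_3, (if 0 < B i k then x i ^+ `|B i k| else 1) = x i ^+ ep t k i.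
  move=> i; move/and4P: (check_t ht) => [_ _ _ /(all3P k) /(all3P i) h].
  move/and5P: h => [/eqP -> _ _ _ _]; rewrite hB; by case: ifP.
have hn : forall i : 'I_3, (if B i k < 0 then x i ^+ `|B i k| else 1) = x i ^+ en t k i.
  move=> i; move/and4P: (check_t ht) => [_ _ _ /(all3P k) /(all3P i) h].
  move/and5P: h => [_ /eqP -> _ _ _]; rewrite hB; by case: ifP.
rewrite (big_mkcond (fun i => 0 < B i k)) (big_mkcond (fun i => B i k < 0)) /=.
rewrite (eq_bigr _ (fun i _ => hp i)) (eq_bigr _ (fun i _ => hn i)) !prod3.
by [].
Qed.

Lemma mu_step (k : 'I_3) (B : 'M[int]_3) x t : (t < 12)%N ->
  (forall i j : 'I_3, B i j = Bt t i j) ->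
  [/\ mutx k B x o0 = (mu3 t k (x o0) (x o1) (x o2)).1.1,
      mutx k B x o1 = (mu3 t k (x o0) (x o1) (x o2)).1.2 &
      mutx k B x o2 = (mu3 t k (x o0) (x o1) (x o2)).2].
Proof.
move=> ht hB; rewrite !(@mutx_step k B x t ht hB).
by case: (ord3_cases k) => [->|[->|->]].
Qed.

Lemma Inv_step x B g (k : 'I_3) : (forall i, Pos (x i)) -> Inv x B g ->
  Inv (mutx k B x) (mutB k B) (mutg k B g).
Proof.
move=> hP [t [s [ht [hB [hg hXW]]]]].
have hnz : forall i, x i != 0 by move=> i; apply: Pos_neq0.
have hex : ex t k (x o0) (x o1) (x o2) != 0.
  have := Pos_neq0 (Pos_mutx k B hP k); rewrite (@mutx_step k B x t ht hB) eqxx.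
  by apply: contraNneq => ->; rewrite mul0r.
have hid := @ident _ t k (x o0) (x o1) (x o2) ht (ltn_ord k) (hnz o0) (hnz o1) (hnz o2) hex.
exists (nx t k), (s (+) fl t k); split.
  move/and4P: (check_t ht) => [h0 h1 h2 _].
  by case: (ord3_cases k) => [->|[->|->]].
split; first exact: mutB_step.
split; first exact: mutg_step.
case: (@mu_step k B x t ht hB) => -> -> ->.
move: hid hXW; case: (fl t k); case: s {hg} => /=; case=> -> -> -> //.
Qed.

Lemma reach_inv x B g : reachable xinit B6 g6 x B g ->
  (forall i, Pos (x i)) /\ Inv x B g.
Proof.
elim=> [|x' B' g' k _ [hP hI]]; last first.
  split; [exact: Pos_mutx | exact: Inv_step].
split; first exact: Pos_xinit.
exists 0%N, false; split => //; split.
  move=> i j; rewrite /B6 mxE.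
  by case: (ord3_cases i) => [->|[->|->]]; case: (ord3_cases j) => [->|[->|->]].
split; first by move=> i; case: (ord3_cases i) => [->|[->|->]].
by [].
Qed.

Definition sel {K : fieldType} (k : 'I_3) (a b c : K) : K :=
  if val k == 0%N then a else if val k == 1%N then b else c.

Lemma sel_x (x : 'I_3 -> ratfun3) k : x k = sel k (x o0) (x o1) (x o2).
Proof. by case: (ord3_cases k) => [->|[->|->]]. Qed.

Lemma deg_sel (K : fieldType) t (k : 'I_3) (a b c : K) : (t < 12)%N ->
  (gt t k = 2 -> Ft t a b c = sel k a b c) /\ (gt t k = -2 -> Gt t a b c = sel k a b c).
Proof.
move=> ht; case: (ord3_cases k) => [->|[->|->]];
do 12?[case: t ht => [|t] ht]; rewrite /gt /sel /=; split => h //; discriminate.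
Qed.

Lemma deg_pm2 x B g k : reachable xinit B6 g6 x B g ->
  (g k = 2 -> x k = X3) /\ (g k = -2 -> x k = W).
Proof.
move=> hr; case: (reach_inv hr) => _ [t [s [ht [hB [hg hXW]]]]].
have [d2 dm2] := @deg_sel _ t k (x o0) (x o1) (x o2) ht.
rewrite hg /Gs sel_x; case: s {hg} hXW => [] [-> ->]; split => h.
- apply: esym; apply: dm2; by rewrite -[gt t k]opprK h.
- apply: esym; apply: d2; by rewrite -[gt t k]opprK h.
- by rewrite d2.
- by rewrite dm2.
Qed.

Theorem mainTheorem6 :
  (exists! z : ratfun3, cluster_var_of_deg xinit B6 g6 2 z) /\
  (exists! z : ratfun3, cluster_var_of_deg xinit B6 g6 (-2) z).
Proof.
split.
  exists X3; split.
    exists xinit, B6, g6, o2; split; first exact: reach_init.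
    by [].
  move=> z [x [B [g [k [hr [<- hg]]]]]]; apply: esym; exact: (@deg_pm2 x B g k hr).1 hg.
have hB0 : forall i j : 'I_3, B6 i j = Bt 0 i j.
  move=> i j; rewrite /B6 mxE.
  by case: (ord3_cases i) => [->|[->|->]]; case: (ord3_cases j) => [->|[->|->]].
have hg0 : forall i : 'I_3, g6 i = Gs 0 false i.
  by move=> i; case: (ord3_cases i) => [->|[->|->]].
have r1 := reach_mut o2 (@reach_init xinit B6 g6).
have r2 := reach_mut o0 r1.
have r3 := reach_mut o1 r2.
have hB1 := @mutB_step o2 B6 0 isT hB0.
have hg1 := @mutg_step o2 B6 g6 0 false isT hB0 hg0.
have hB2 := @mutB_step o0 _ (nx 0 o2) isT hB1.
have hg2 := @mutg_step o0 _ _ (nx 0 o2) _ isT hB1 hg1.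
have hg3 := @mutg_step o1 _ _ (nx (nx 0 o2) o0) _ isT hB2 hg2.
have hdeg : mutg o1 (mutB o0 (mutB o2 B6))
   (mutg o0 (mutB o2 B6) (mutg o2 B6 g6)) o1 = -2 by rewrite hg3.
exists W; split.
  eexists; eexists; eexists; exists o1; split; first exact: r3.
  split; last exact: hdeg.
  exact: (deg_pm2 o1 r3).2 hdeg.
move=> z [x [B [g [k [hr [<- hg]]]]]]; apply: esym; exact: (@deg_pm2 x B g k hr).2 hg.
Qed.
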